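(* Let $n\ge 1$ and let $\mathcal F,\mathcal G\subset 2^{[n]}$ be down-sets with $|\mathcal F|\le|\mathcal G|$. Then there is a matching in the bipartite Kneser graph $KG(\mathcal F,\mathcal G)$ that covers every vertex of $\mathcal F$; equivalently, there is an injective map $\phi:\mathcal F\to\mathcal G$ such that $A\cap\phi(A)=\emptyset$ for every $A\in\mathcal F$.
   Context: $[n]=\{1,\dots,n\}$ and $2^{[n]}$ is its power set. A family $\mathcal B\subset 2^{[n]}$ is a down-set if $B\in\mathcal B$ and $A\subset B$ imply $A\in\mathcal B$. For families $\mathcal F,\mathcal G$, the bipartite Kneser graph $KG(\mathcal F,\mathcal G)$ has partite sets $\mathcal F$ and $\mathcal G$ (taken as disjoint copies) and edge set $\{(F,G):F\in\mathcal F,\ G\in\mathcal G,\ F\cap G=\emptyset\}$. *)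

(* Defs.v *)
From mathcomp Require Import all_boot.
Set Implicit Arguments. Unset Strict Implicit. Unset Printing Implicit Defensive.

Definition down_set (n : nat) (B : {set {set 'I_n}}) : Prop :=
  forall A C : {set 'I_n}, C \in B -> A \subset C -> A \in B.

(* Main.v *)
Require Import Defs.
From mathcomp Require Import all_boot zify.
Set Implicit Arguments. Unset Strict Implicit. Unset Printing Implicit Defensive.

Section Hall.
Variables (A B : finType) (r : A -> B -> bool) (b0 : B).

Definition nbh (G : {set B}) (S : {set A}) := [set b in G | [exists a in S, r a b]].

Lemma nbhS (G : {set B}) (S T : {set A}) : S \subset T -> nbh G S \subset nbh G T.
Proof.
move=> sST; apply/subsetP => b; rewrite !inE => /andP[-> /existsP[a /andP[aS rab]]].
by apply/existsP; exists a; rewrite (subsetP sST) ?rab.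
Qed.

Lemma hall_ind k : forall (F : {set A}) (G : {set B}), #|F| <= k ->
  (forall S : {set A}, S \subset F -> #|S| <= #|nbh G S|) ->
  exists phi : A -> B, {in F &, injective phi} /\
    (forall a, a \in F -> phi a \in G /\ r a (phi a)).
Proof.
elim: k => [|k IH] F G hF hall.
  exists (fun _ => b0); split.
    by move=> x y; move: hF; rewrite leqn0 => /eqP/cards0_eq ->; rewrite inE.
  by move=> a; move: hF; rewrite leqn0 => /eqP/cards0_eq ->; rewrite inE.
have [hk|hk] := leqP #|F| k; first exact: IH.
have eF : #|F| = k.+1 by apply/eqP; rewrite eqn_leq hF hk.
case: (boolP [exists S : {set A}, [&& S \subset F, S != set0, S != F & #|nbh G S| <= #|S|]]).
- case/existsP => S0 /and4P[sS0F S0n0 S0nF hS0].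
  have [phi1 [inj1 h1]] : exists phi : A -> B, {in S0 &, injective phi} /\
    (forall a, a \in S0 -> phi a \in G /\ r a (phi a)).
    apply: IH.
      rewrite -ltnS -eF; apply: proper_card; by rewrite properEneq S0nF.
    by move=> S sS; apply: hall; apply: subset_trans sS sS0F.
  have [phi2 [inj2 h2]] : exists phi : A -> B, {in F :\: S0 &, injective phi} /\
    (forall a, a \in F :\: S0 -> phi a \in G :\: nbh G S0 /\ r a (phi a)).
    apply: IH.
      have := cardsID S0 F; rewrite (setIidPr sS0F).
      have : 0 < #|S0| by rewrite card_gt0.
      lia.
    move=> T sT.
    have dT : [disjoint T & S0].
      rewrite disjoints_subset; apply: subset_trans sT _.
      by rewrite setDE subsetIr.
    have cTS : #|T :|: S0| = #|T| + #|S0|.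
      by rewrite cardsU (disjoint_setI0 dT) cards0 subn0.
    have sTS : T :|: S0 \subset F.
      rewrite subUset sS0F andbT; apply: subset_trans sT _; exact: subsetDl.
    have hTS := hall _ sTS.
    have eN : nbh (G :\: nbh G S0) T = nbh G (T :|: S0) :\: nbh G S0.
      apply/setP => b; rewrite !inE.
      case: (b \in G); rewrite ?andbF //=.
      case E: [exists a in S0, r a b]; rewrite /= ?andbF //.
      apply/idP/idP.
        by case/existsP => a /andP[aT rab]; apply/existsP; exists a; rewrite inE aT rab.
      case/existsP => a /andP[]; rewrite inE => /orP[aT rab|aS rab].
        by apply/existsP; exists a; rewrite aT rab.
      by move/negbT: E => /existsPn/(_ a); rewrite aS rab.
    rewrite eN.
    have := cardsID (nbh G S0) (nbh G (T :|: S0)).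
    rewrite (setIidPr (nbhS G (subsetUr T S0))).
    lia.
  exists (fun a => if a \in S0 then phi1 a else phi2 a); split.
    move=> x y xF yF /=.
    case: (boolP (x \in S0)) => xS; case: (boolP (y \in S0)) => yS.
    + exact: inj1.
    + have [] := h2 y; first by rewrite inE yS yF.
      move=> /setDP[_ H] _ E; exfalso; move: H; rewrite -E.
      have [g1 r1] := h1 x xS.
      by rewrite inE g1 /=; apply/negP/negPn/existsP; exists x; rewrite xS r1.
    + have [] := h2 x; first by rewrite inE xS xF.
      move=> /setDP[_ H] _ E; exfalso; move: H; rewrite E.
      have [g1 r1] := h1 y yS.
      by rewrite inE g1 /=; apply/negP/negPn/existsP; exists y; rewrite yS r1.
    + by apply: inj2; rewrite inE ?xS ?yS.
  move=> a aF; case: (boolP (a \in S0)) => aS; first exact: h1.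
  have [] := h2 a; first by rewrite inE aS aF.
  by move=> /setDP[].
- move=> /existsPn hno.
  have : F != set0 by rewrite -card_gt0 eF.
  case/set0Pn => a aF.
  have : 0 < #|nbh G [set a]|.
    apply: leq_trans (hall _ _); first by rewrite cards1.
    by rewrite sub1set.
  rewrite card_gt0 => /set0Pn[b]; rewrite inE => /andP[bG /existsP[a' /andP[]]].
  rewrite inE => /eqP -> rab.
  have [phi [inj h]] : exists phi : A -> B, {in F :\ a &, injective phi} /\
    (forall x, x \in F :\ a -> phi x \in G :\ b /\ r x (phi x)).
    apply: IH.
      by move: (cardsD1 a F); rewrite aF eF add1n => -[->].
    move=> T sT.
    case: (eqVneq T set0) => [->|Tn0]; first by rewrite cards0.
    have sTF : T \subset F by apply: subset_trans sT (subsetDl _ _).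
    have TnF : T != F.
      apply/eqP => E; move: sT; rewrite E => /subsetP /(_ a aF).
      by rewrite !inE eqxx.
    have := hno T; rewrite sTF Tn0 TnF /= -ltnNge => hlt.
    have eN : nbh (G :\ b) T = nbh G T :\ b.
      by apply/setP => c; rewrite !inE andbA.
    rewrite eN; move: (cardsD1 b (nbh G T)).
    case: (b \in nbh G T) => /=; lia.
  exists (fun x => if x == a then b else phi x); split.
    move=> x y xF yF /=.
    case: (eqVneq x a) => [->|xa]; case: (eqVneq y a) => [->|ya] //.
    + move=> E; have [] := h y; first by rewrite !inE ya yF.
      by rewrite -E !inE eqxx.
    + move=> E; have [] := h x; first by rewrite !inE xa xF.
      by rewrite E !inE eqxx.
    + by apply: inj; rewrite !inE ?xa ?ya ?xF ?yF.
  move=> x xF; case: (eqVneq x a) => [->|xa]; first by split.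
  have [] := h x; first by rewrite !inE xa xF.
  by rewrite inE => /andP[].
Qed.
End Hall.
Section HK.
Variable T : finType.

Lemma split_count (H : {set {set T}}) (x : T) :
  #|H| = #|[set A in H | x \notin A]| + #|[set A : {set T} | (x \notin A) && (x |: A \in H)]|.
Proof.
have E : [set A : {set T} | (x \notin A) && (x |: A \in H)] =i
   [set (A :\ x) | A in [set A in H | x \in A]].
  move=> A; rewrite inE; apply/idP/imsetP.
    case/andP=> xA hA; exists (x |: A); first by rewrite inE hA setU11.
    by rewrite setU1K.
  case=> B; rewrite inE => /andP[hB xB] ->.
  by rewrite !inE eqxx /= setD1K.
rewrite (eq_card E) card_in_imset; last first.
  move=> A B; rewrite !inE => /andP[_ xA] /andP[_ xB] EE.
  by rewrite -(setD1K xA) -(setD1K xB) EE.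
rewrite -(cardsID [set A : {set T} | x \in A] H) addnC; congr (_ + _); apply: eq_card => A;
  by rewrite !inE andbC.
Qed.

Lemma HK k : forall X : {set T}, #|X| = k -> forall F U : {set {set T}},
  (forall A : {set T}, A \in F -> A \subset X) -> (forall A : {set T}, A \in U -> A \subset X) ->
  (forall A B : {set T}, A \in F -> B \subset A -> B \in F) ->
  (forall A B : {set T}, A \in U -> A \subset B -> B \subset X -> B \in U) ->
  #|F :&: U| * 2 ^ k <= #|F| * #|U|.
Proof.
elim: k => [|k IH] X cX F U sF sU dF uU.
  rewrite expn0 muln1.
  case: (posnP #|F :&: U|) => [->//|p].
  have h1 : #|F :&: U| <= #|F| by apply: subset_leq_card; exact: subsetIl.
  have h2 : #|F :&: U| <= #|U| by apply: subset_leq_card; exact: subsetIr.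
  nia.
have : X != set0 by rewrite -card_gt0 cX.
case/set0Pn => x xX.
set X' := X :\ x.
have cX' : #|X'| = k by move: (cardsD1 x X); rewrite xX cX add1n => -[].
set F0 := [set A in F | x \notin A].
set F1 := [set A : {set T} | (x \notin A) && (x |: A \in F)].
set U0 := [set A in U | x \notin A].
set U1 := [set A : {set T} | (x \notin A) && (x |: A \in U)].
set I0 := [set A in F :&: U | x \notin A].
set I1 := [set A : {set T} | (x \notin A) && (x |: A \in F :&: U)].
have eF := split_count F x; have eU := split_count U x; have eI := split_count (F :&: U) x.
rewrite -/F0 -/F1 in eF; rewrite -/U0 -/U1 in eU; rewrite -/I0 -/I1 in eI.
have eI0 : I0 = F0 :&: U0.
 by apply/setP => A; rewrite !inE; case: (A \in F); case: (A \in U); case: (x \in A).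
have eI1 : I1 = F1 :&: U1.
 by apply/setP => A; rewrite !inE; case: (x \in A); case: (x |: A \in F).
have sub' : forall A : {set T}, x \notin A -> A \subset X -> A \subset X'.
  move=> A xA AX; apply/subsetP => y yA; rewrite !inE (subsetP AX) // andbT.
  by apply: contraNneq xA => <-.
have sub2 : forall A : {set T}, x |: A \subset X -> A \subset X.
  by move=> A; apply: subset_trans; exact: subsetUr.
have subX : forall A : {set T}, A \subset X' -> x |: A \subset X.
  by move=> A AX; rewrite subUset sub1set xX (subset_trans AX) // subsetDl.
have xnX' : forall A : {set T}, A \subset X' -> x \notin A.
  by move=> A /subsetP AX; apply/negP => /AX; rewrite !inE eqxx.
have h0 : #|F0 :&: U0| * 2 ^ k <= #|F0| * #|U0|.
  apply: (IH X' cX').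
  - by move=> A; rewrite inE => /andP[/sF ? ?]; apply: sub'.
  - by move=> A; rewrite inE => /andP[/sU ? ?]; apply: sub'.
  - move=> A B; rewrite !inE => /andP[AF xA] BA; rewrite (dF _ _ AF BA) /=.
    by apply: contra xA; apply: (subsetP BA).
  - move=> A B; rewrite !inE => /andP[AU xA] AB BX.
    rewrite (xnX' _ BX) andbT; apply: (uU _ _ AU AB).
    by apply: subset_trans BX (subsetDl _ _).
have h1 : #|F1 :&: U1| * 2 ^ k <= #|F1| * #|U1|.
  apply: (IH X' cX').
  - by move=> A; rewrite inE => /andP[xA /sF /sub2 ?]; apply: sub'.
  - by move=> A; rewrite inE => /andP[xA /sU /sub2 ?]; apply: sub'.
  - move=> A B; rewrite !inE => /andP[xA AF] BA.
    rewrite (dF _ _ AF) ?andbT; last by apply: setUS.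
    by apply: contra xA; apply: (subsetP BA).
  - move=> A B; rewrite !inE => /andP[xA AU] AB BX.
    rewrite (xnX' _ BX) /=; apply: (uU _ _ AU); first by apply: setUS.
    exact: subX.
have f10 : #|F1| <= #|F0|.
  apply: subset_leq_card; apply/subsetP => A; rewrite !inE => /andP[xA AF].
  by rewrite xA andbT (dF _ _ AF) // subsetUr.
have u01 : #|U0| <= #|U1|.
  apply: subset_leq_card; apply/subsetP => A; rewrite !inE => /andP[AU xA].
  rewrite xA /=; apply: (uU _ _ AU); first exact: subsetUr.
  by rewrite subUset sub1set xX sU.
rewrite eF eU eI eI0 eI1 expnS.
move: h0 h1 f10 u01.
set a0 := #|F0 :&: U0|; set a1 := #|F1 :&: U1|.
set f0 := #|F0|; set f1 := #|F1|; set u0 := #|U0|; set u1 := #|U1|; set p := 2 ^ k.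
nia.
Qed.
End HK.

Theorem theorem1p5 (n : nat) (F G : {set {set 'I_n}}) :
  1 <= n -> down_set F -> down_set G -> #|F| <= #|G| ->
  exists phi : {set 'I_n} -> {set 'I_n},
    {in F &, injective phi} /\
    (forall A, A \in F -> phi A \in G) /\
    (forall A, A \in F -> [disjoint A & phi A]).
Proof.
move=> _ dF dG hFG.
suff hall : forall S : {set {set 'I_n}}, S \subset F ->
    #|S| <= #|nbh (fun A B : {set 'I_n} => [disjoint A & B]) G S|.
  have [phi [inj h]] := @hall_ind _ _ (fun A B : {set 'I_n} => [disjoint A & B]) set0 #|F| F G (leqnn _) hall.
  exists phi; split; first exact: inj.
  by split => A /h [].  
move=> S sSF.
set U := [set B : {set 'I_n} | [exists A in S, A \subset B]].
set D := [set B : {set 'I_n} | [exists A in S, [disjoint A & B]]].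
have eN : nbh (fun A B : {set 'I_n} => [disjoint A & B]) G S = G :&: D.
  by apply/setP => B; rewrite !inE.
rewrite eN.
set P := 2 ^ #|[set: 'I_n]|.
have P0 : 0 < P by rewrite expn_gt0.
have h1 : #|S| <= #|F :&: U|.
  apply: subset_leq_card; apply/subsetP => A AS; rewrite !inE (subsetP sSF) //=.
  by apply/existsP; exists A; rewrite AS subxx.
have h2 : #|F :&: U| * P <= #|F| * #|U|.
  apply: (HK (X := [set: 'I_n])) => //.
  - by move=> A B AF BA; apply: dF AF BA.
  - move=> A B; rewrite !inE => /existsP[C /andP[CS CA]] AB _.
    by apply/existsP; exists C; rewrite CS (subset_trans CA AB).
have eUD : #|U| = #|D|.
  have E : U =i [set ~: B | B in D].
    move=> B; apply/idP/imsetP.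
      rewrite inE => /existsP[C /andP[CS CB]]; exists (~: B); last by rewrite setCK.
      by rewrite inE; apply/existsP; exists C; rewrite CS disjoints_subset setCK.
    case=> B' ; rewrite inE => /existsP[C /andP[CS CB]] ->.
    by rewrite inE; apply/existsP; exists C; rewrite CS -disjoints_subset.
  by rewrite (eq_card E) card_imset //; apply: setC_inj.
have h3 : #|G :&: ~: D| * P <= #|G| * #|~: D|.
  apply: (HK (X := [set: 'I_n])) => //.
  - by move=> A B AG BA; apply: dG AG BA.
  - move=> A B; rewrite !inE => AD AB _; apply: contra AD.
    case/existsP => C /andP[CS CB]; apply/existsP; exists C; rewrite CS /=.
    exact: disjointWr AB CB.
have h4 := cardsID D G; rewrite setDE in h4.
have h5 : #|D| + #|~: D| = P.
  rewrite cardsC /P -card_powerset; apply: eq_card => B.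
  by rewrite powersetE subsetT.
move: h1 h2 h3 h4 h5 eUD hFG P0.
set s := #|S|; set a := #|F :&: U|; set f := #|F|; set u := #|U|; set c := #|G :&: ~: D|.
set g := #|G|; set dc := #|~: D|; set e := #|G :&: D|; set d := #|D|.
nia.
Qed.
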